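(* Let $\Gamma=([n],E)$ be a connected simple graph and let $M\subseteq[n]$ be a subset of maximal cardinality such that the induced subgraph $\Gamma|_M$ is isomorphic to the path $L_{|M|}$. Then for every integer $k\ge|M|$ the polytopes $Q_{\Gamma,k}$ and $Q_{\Gamma,|M|-1}$ are normally equivalent, i.e. their normal fans coincide.
   Context: $L_r$ is the path graph on $r$ vertices. For $S\subseteq[n]$ nonempty, $\Delta_S=\mathrm{conv}\{e_s:s\in S\}\subset\mathbb{R}^n$, $e_s$ the standard basis vectors. For an integer $m\ge0$, the $m$-graph polytope is the Minkowski sum $Q_{\Gamma,m}=\sum_{S}\Delta_S$ over all nonempty $S\subseteq[n]$ with $|S|\le m+1$ and $\Gamma|_S$ connected. *)

(* Defs.v *)
From HB Require Import structures.
From mathcomp Require Import all_boot all_order all_algebra.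
From mathcomp Require Import reals.
Set Implicit Arguments. Unset Strict Implicit. Unset Printing Implicit Defensive.
Import Order.TTheory GRing.Theory Num.Theory.
Local Open Scope ring_scope.

(** Graphs on [n] = 'I_n: a relation e, assumed symmetric and irreflexive
    (simple graph) in the theorem. *)

Definition induced_rel (n : nat) (e : rel 'I_n) (S : {set 'I_n}) : rel 'I_n :=
  [rel x y | [&& e x y, x \in S & y \in S]].

Definition induced_connected (n : nat) (e : rel 'I_n) (S : {set 'I_n}) : bool :=
  (S != set0) &&
  [forall x in S, forall y in S, connect (induced_rel e S) x y].

Definition connected_graph (n : nat) (e : rel 'I_n) : bool :=
  induced_connected e [set: 'I_n].

Definition induced_is_path (n : nat) (e : rel 'I_n) (S : {set 'I_n}) : Prop :=
  exists f : 'I_#|S| -> 'I_n,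
    [/\ injective f, (forall i, f i \in S) &
        (forall i j : 'I_#|S|,
            e (f i) (f j) = ((i.+1 == j :> nat) || (j.+1 == i :> nat)))].

Definition pt (R : realType) (n : nat) := 'I_n -> R.

Definition dotp (R : realType) (n : nat) (w x : pt R n) : R :=
  \sum_(i < n) w i * x i.

Definition basis_vec (R : realType) (n : nat) (s : 'I_n) : pt R n :=
  fun i => if s == i then 1 else 0.

Definition conv (R : realType) (n : nat) (I : finType) (P : {set I})
    (v : I -> pt R n) : pt R n -> Prop :=
  fun x => exists lam : I -> R,
    [/\ (forall s, s \in P -> 0 <= lam s),
        \sum_(s in P) lam s = 1 &
        (forall i, x i = \sum_(s in P) lam s * v s i)].

Definition simplex (R : realType) (n : nat) (S : {set 'I_n}) : pt R n -> Prop :=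
  conv S (@basis_vec R n).

Definition minkowski (R : realType) (n : nat) (J : finType) (A : pred J)
    (P : J -> pt R n -> Prop) : pt R n -> Prop :=
  fun x => exists y : J -> pt R n,
    (forall j, A j -> P j (y j)) /\
    (forall i, x i = \sum_(j | A j) y j i).

Definition adm_set (n : nat) (e : rel 'I_n) (m : nat) (S : {set 'I_n}) : bool :=
  [&& S != set0, (#|S| <= m.+1)%N & induced_connected e S].

Definition graph_polytope (R : realType) (n : nat) (e : rel 'I_n) (m : nat)
    : pt R n -> Prop :=
  minkowski (adm_set e m) (fun S => @simplex R n S).

Definition face_w (R : realType) (n : nat) (P : pt R n -> Prop) (w : pt R n)
    : pt R n -> Prop :=
  fun x => P x /\ forall y, P y -> dotp w y <= dotp w x.

Definition set_eq (R : realType) (n : nat) (A B : pt R n -> Prop) : Prop :=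
  forall x, A x <-> B x.

Definition is_face (R : realType) (n : nat) (P F : pt R n -> Prop) : Prop :=
  (exists x, F x) /\ exists w, set_eq F (face_w P w).

Definition normal_cone (R : realType) (n : nat) (P F : pt R n -> Prop)
    : pt R n -> Prop :=
  fun w => forall x, F x -> face_w P w x.

Definition normally_equivalent (R : realType) (n : nat) (P Q : pt R n -> Prop)
    : Prop :=
  (forall F, is_face P F ->
     exists G, is_face Q G /\ set_eq (normal_cone P F) (normal_cone Q G)) /\
  (forall G, is_face Q G ->
     exists F, is_face P F /\ set_eq (normal_cone P F) (normal_cone Q G)).

(* Main.v *)
Require Import Defs.
From HB Require Import structures.
From mathcomp Require Import all_boot all_order all_algebra.
From mathcomp Require Import reals.
From mathcomp Require Import zify.
Set Implicit Arguments. Unset Strict Implicit. Unset Printing Implicit Defensive.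
Import Order.TTheory GRing.Theory Num.Theory.

Definition cond (R : realType) (n : nat) (e : rel 'I_n) (m : nat) (w0 w : pt R n) : Prop :=
  forall S, adm_set e m S -> forall u, u \in S -> (forall t, t \in S -> (w0 t <= w0 u)%R) ->
    forall t, t \in S -> (w t <= w u)%R.

Section Poly.
Variables (R : realType) (n : nat) (e : rel 'I_n) (i0 : 'I_n).
Local Open Scope ring_scope.

Lemma sum_le_eq (I : finType) (P : pred I) (F G : I -> R) :
  (forall i, P i -> F i <= G i) -> \sum_(i | P i) F i = \sum_(i | P i) G i ->
  forall i, P i -> F i = G i.
Proof.
move=> FG eqs.
have H0 : \sum_(i | P i) (G i - F i) = 0 by rewrite sumrB eqs subrr.
have hp : forall j, P j -> 0 <= G j - F j by move=> j Pj; rewrite subr_ge0 FG.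
move=> i Pi; have := psumr_eq0P hp H0 Pi.
by move/eqP; rewrite subr_eq0 => /eqP.
Qed.

Lemma dotp_simplex (S : {set 'I_n}) (lam : 'I_n -> R) (w : pt R n) (y : pt R n) :
  (forall i, y i = \sum_(s in S) lam s * @basis_vec R n s i) ->
  dotp w y = \sum_(s in S) lam s * w s.
Proof.
move=> hy; rewrite /dotp.
under eq_bigr => i _ do rewrite hy big_distrr /=.
rewrite exchange_big /=; apply: eq_bigr => s sS.
rewrite (bigD1 s) //= big1 ?addr0 /basis_vec ?eqxx; first by rewrite mulr1 mulrC.
by move=> i ni; rewrite eq_sym (negbTE ni) !mulr0.
Qed.

Lemma conv_le (S : {set 'I_n}) (lam : 'I_n -> R) (w : pt R n) (a : 'I_n) :
  (forall s, s \in S -> 0 <= lam s) -> \sum_(s in S) lam s = 1 ->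
  (forall t, t \in S -> w t <= w a) ->
  \sum_(s in S) lam s * w s <= w a.
Proof.
move=> l0 l1 wa.
rewrite -[w a]mul1r -l1 mulr_suml; apply: ler_sum => s sS.
by rewrite ler_wpM2l ?l0 ?wa.
Qed.

Lemma dotp_sum (J : finType) (A : pred J) (y : J -> pt R n) (x w : pt R n) :
  (forall i, x i = \sum_(j | A j) y j i) -> dotp w x = \sum_(j | A j) dotp w (y j).
Proof.
move=> hx; rewrite /dotp.
under eq_bigr => i _ do rewrite hx big_distrr.
by rewrite exchange_big.
Qed.

Variable m : nat.
Notation Q := (@graph_polytope R n e m).

Lemma argmax_fun (w : pt R n) : exists a : {set 'I_n} -> 'I_n,
  forall S, adm_set e m S -> a S \in S /\ forall t, t \in S -> w t <= w (a S).
Proof.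
suff /fin_all_exists : forall S : {set 'I_n}, exists s : 'I_n,
  adm_set e m S -> s \in S /\ forall t, t \in S -> w t <= w s by [].
move=> S; case: (set0Pn S) => [[x xS]|nS]; last first.
  by exists i0 => /and3P[/set0Pn/nS].
exists [arg max_(i > x in S) w i]%O => _.
case: arg_maxP => // j jS jmax; split => // t tS; exact: jmax.
Qed.

Lemma Q_le w (a : {set 'I_n} -> 'I_n)
  (Ha : forall S, adm_set e m S -> a S \in S /\ forall t, t \in S -> w t <= w (a S)) x :
  Q x -> dotp w x <= \sum_(S | adm_set e m S) w (a S).
Proof.
case=> y [hy hx]; rewrite (dotp_sum w hx); apply: ler_sum => S aS.
case: (hy S aS) => lam [l0 l1 ly]; rewrite (dotp_simplex w ly).
by apply: conv_le => //; exact: (Ha S aS).2.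
Qed.

Definition xpt (b : {set 'I_n} -> 'I_n) : pt R n :=
  fun i => \sum_(S | adm_set e m S) @basis_vec R n (b S) i.

Lemma xpt_in b : (forall S, adm_set e m S -> b S \in S) -> Q (xpt b).
Proof.
move=> hb; exists (fun S => @basis_vec R n (b S)); split => // S aS.
exists (fun s => if s == b S then 1 else 0); split.
- by move=> s _; case: ifP.
- rewrite (bigD1 (b S)) ?hb //= eqxx big1 ?addr0 // => s /andP[_ /negbTE ->] //.
- move=> i; rewrite (bigD1 (b S)) ?hb //= eqxx mul1r big1 ?addr0 // => s /andP[_ /negbTE ->].
  by rewrite mul0r.
Qed.

Lemma dotp_xpt w b : dotp w (xpt b) = \sum_(S | adm_set e m S) w (b S).
Proof.
rewrite (@dotp_sum _ _ (fun S => @basis_vec R n (b S)) _ w (fun i => erefl)).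
apply: eq_bigr => S _.
rewrite /dotp (bigD1 (b S)) //= /basis_vec eqxx mulr1 big1 ?addr0 // => i ni.
by rewrite eq_sym (negbTE ni) mulr0.
Qed.

Lemma face_iff w (a : {set 'I_n} -> 'I_n)
  (Ha : forall S, adm_set e m S -> a S \in S /\ forall t, t \in S -> w t <= w (a S)) x :
  face_w Q w x <-> Q x /\ dotp w x = \sum_(S | adm_set e m S) w (a S).
Proof.
split.
- case=> Qx mx; split=> //; apply/eqP; rewrite eq_le (Q_le Ha) //=.
  have := mx _ (xpt_in (fun S aS => (Ha S aS).1)); by rewrite dotp_xpt.
- case=> Qx hx; split => // y Qy; rewrite hx; exact: Q_le.
Qed.

Lemma face_nonempty w : exists x, face_w Q w x.
Proof.
have [a Ha] := argmax_fun w; exists (xpt a); apply/(face_iff Ha); split.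
  exact: (xpt_in (fun S aS => (Ha S aS).1)).
by rewrite dotp_xpt.
Qed.

Lemma nc_char w0 w : normal_cone Q (face_w Q w0) w <-> cond e m w0 w.
Proof.
have [a0 Ha0] := argmax_fun w0; have [a Ha] := argmax_fun w.
split.
- move=> NC S aS u uS umax t tS.
  pose b S' := if S' == S then u else a0 S'.
  have hb : forall S', adm_set e m S' -> b S' \in S'.
    by move=> S' aS'; rewrite /b; case: eqP => [->//|_]; exact: (Ha0 S' aS').1.
  have F0 : face_w Q w0 (xpt b).
    apply/(face_iff Ha0); split; first exact: xpt_in.
    rewrite dotp_xpt; apply: eq_bigr => S' aS'; rewrite /b; case: eqP => [->|//].
    apply/le_anti/andP; split; [exact: (Ha0 S aS).2 | exact: umax (Ha0 S aS).1].
  have := NC _ F0; move/(face_iff Ha) => [_]; rewrite dotp_xpt => eqs.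
  have := sum_le_eq (F := fun S' => w (b S')) (G := fun S' => w (a S'))
     (fun S' aS' => (Ha S' aS').2 _ (hb S' aS')) eqs aS.
  rewrite /b eqxx => ->; exact: (Ha S aS).2.
- move=> C x /(face_iff Ha0) [Qx vx]; apply/(face_iff Ha); split => //.
  case: (Qx) => y [hy hx].
  rewrite (dotp_sum w hx); rewrite (dotp_sum w0 hx) in vx.
  have le0 : forall S, adm_set e m S -> dotp w0 (y S) <= w0 (a0 S).
    move=> S aS; case: (hy S aS) => lam [l0 l1 ly]; rewrite (dotp_simplex w0 ly).
    by apply: conv_le => //; exact: (Ha0 S aS).2.
  have eq0 := sum_le_eq le0 vx.
  apply: eq_bigr => S aS.
  case: (hy S aS) => lam [l0 l1 ly]; rewrite (dotp_simplex w ly).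
  have := eq0 S aS; rewrite (dotp_simplex w0 ly) => e0.
  have e1 : forall s, s \in S -> lam s * w0 s = lam s * w0 (a0 S).
    apply: (sum_le_eq (P := fun s => s \in S)).
      by move=> s sS; rewrite ler_wpM2l ?l0 // (Ha0 S aS).2.
    by rewrite e0 -mulr_suml l1 mul1r.
  rewrite -[w (a S)]mul1r -l1 mulr_suml; apply: eq_bigr => s sS.
  have [->|ln0] := eqVneq (lam s) 0; first by rewrite !mul0r.
  congr (_ * _).
  have ws : w0 s = w0 (a0 S) by apply: (mulfI ln0); exact: e1.
  have smax : forall t, t \in S -> w0 t <= w0 s by move=> t tS; rewrite ws (Ha0 S aS).2.
  apply/le_anti/andP; split; first exact: (Ha S aS).2.
  exact: (C S aS s sS smax (a S) (Ha S aS).1).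
Qed.

End Poly.

Section Graph.
Variables (n : nat) (e : rel 'I_n) (e_sym : symmetric e) (e_irr : irreflexive e).
Variables (S : {set 'I_n}) (u : 'I_n) (uS : u \in S).

Fixpoint reach (N : nat) : pred 'I_n :=
  if N is N'.+1 then fun x => [exists y, reach N' y && induced_rel e S y x]
  else pred1 u.

Definition isdist x N := reach N x /\ forall M, reach M x -> N <= M.

Lemma connect_reach v : connect (induced_rel e S) u v -> exists N, reach N v.
Proof.
move/connectP=> [p pth ->].
elim/last_ind: p pth => [|p z IH]; first by exists 0 => /=.
rewrite rcons_path => /andP[pp rz]; have [N hN] := IH pp.
exists N.+1 => /=; rewrite last_rcons; apply/existsP; exists (last u p).
by rewrite hN.
Qed.

Lemma reach_in N x : reach N x -> x \in S.
Proof.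
case: N => [/eqP -> //|N] /= /existsP [y /andP[_]].
by case/and3P.
Qed.

Lemma isdist_step N v : isdist v N.+1 -> exists y, isdist y N /\ induced_rel e S y v.
Proof.
case=> /existsP [y /andP[ry ryv]] hmin; exists y; split => //; split => // M hM.
have : reach M.+1 v by apply/existsP; exists y; apply/andP.
by move/hmin.
Qed.

Lemma isdist_edge Nx Ny x y : isdist x Nx -> isdist y Ny -> induced_rel e S x y ->
  Ny <= Nx.+1.
Proof.
move=> [rx _] [_ hy] rxy; apply: hy => /=; apply/existsP; exists x; by rewrite rx.
Qed.

Lemma isdist_uniq x N1 N2 : isdist x N1 -> isdist x N2 -> N1 = N2.
Proof.
move=> [r1 h1] [r2 h2]; apply/eqP; rewrite eqn_leq h1 // h2 //.
Qed.

Lemma chain N v : isdist v N -> exists g : nat -> 'I_n,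
  [/\ g N = v, (forall j, j <= N -> isdist (g j) j) &
      (forall j, j < N -> induced_rel e S (g j) (g j.+1))].
Proof.
elim: N v => [|N IH] v hv.
  exists (fun _ => v); split => // j; rewrite leqn0 => /eqP -> //.
have [y [hy ryv]] := isdist_step hv; have [g [gN gd ge]] := IH y hy.
exists (fun j => if j == N.+1 then v else g j); split.
- by rewrite eqxx.
- move=> j; rewrite leq_eqVlt; case: eqP => [-> _ //| _ /=]; exact: gd.
- move=> j jl; rewrite (ltn_eqF jl) eqSS.
  case: eqP => [->|ne]; first by rewrite gN.
  apply: ge; rewrite ltn_neqAle; apply/andP; split; [exact/eqP | by []].
Qed.

Lemma geodesic v : induced_connected e S -> v \in S ->
  exists T : {set 'I_n}, [/\ T \subset S, u \in T, v \in T,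
    induced_connected e T & induced_is_path e T].
Proof.
case/andP=> _ /forallP /(_ u) /implyP /(_ uS) /forallP /(_ v) /implyP hc vS.
have hex := connect_reach (hc vS).
case: (ex_minnP hex) => N rN minN.
have [g [gN gd ge]] := chain (conj rN minN).
have gS : forall j, j <= N -> g j \in S by move=> j /gd [/reach_in].
have g0 : g 0 = u by have [/eqP] := gd 0 (leq0n _).
have ginj : forall i j, i <= N -> j <= N -> g i = g j -> i = j.
  by move=> i j iN jN eij; apply: (isdist_uniq (gd i iN)); rewrite eij; exact: gd.
pose T := [set g (nat_of_ord j) | j in [set: 'I_N.+1]].
have inT : forall j, j <= N -> g j \in T.
  by move=> j jN; apply/imsetP; exists (Ordinal (jN : j < N.+1)); rewrite ?inE.
have Tchar : forall x, x \in T -> exists2 j, j <= N & x = g j.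
  by move=> x /imsetP [j _ ->]; exists j => //; exact: (ltn_ord j).
have cT : #|T| = N.+1.
  rewrite card_imset ?cardsT ?card_ord // => i j /ginj h; apply: val_inj; by apply: h; rewrite -ltnS ltn_ord.
have Tcon : forall j, j <= N -> connect (induced_rel e T) u (g j).
  elim=> [|k IH] kN; first by rewrite g0 connect0.
  apply: connect_trans (IH (ltnW kN)) _; apply: connect1.
  have := ge k kN; case/and3P => ej _ _; apply/and3P; split; [exact: ej | apply: inT; exact: ltnW | exact: inT].
have symT : connect_sym (induced_rel e T).
  apply: sym_connect_sym => x y; by rewrite /induced_rel /= e_sym [(x \in T) && _]andbC.
exists T; split.
- by apply/subsetP => x /Tchar [j jN ->]; exact: gS.
- by rewrite -g0 inT.
- by rewrite -gN inT.
- apply/andP; split; first by apply/set0Pn; exists u; rewrite -g0 inT.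
  apply/forallP => x; apply/implyP => /Tchar [i iN ->].
  apply/forallP => y; apply/implyP => /Tchar [j jN ->].
  by apply: connect_trans (Tcon j jN); rewrite symT; exact: Tcon.
- have ltT : forall i : 'I_#|T|, i <= N by move=> i; rewrite -ltnS -cT ltn_ord.
  exists (fun i : 'I_#|T| => g i); split.
  + by move=> i j /ginj h; apply: val_inj; apply: h.
  + by move=> i; apply: inT.
  + move=> i j; apply/idP/idP.
    * move=> eij.
      have r1 : induced_rel e S (g i) (g j) by rewrite /induced_rel /= eij !gS.
      have r2 : induced_rel e S (g j) (g i) by rewrite /induced_rel /= e_sym eij !gS.
      have h1 := isdist_edge (gd i (ltT i)) (gd j (ltT j)) r1.
      have h2 := isdist_edge (gd j (ltT j)) (gd i (ltT i)) r2.
      have nij : (i : nat) != j.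
        apply/eqP => ij; move: eij; rewrite ij e_irr //.
      move: h1 h2 nij; move: (i : nat) (j : nat) => a b; clear; lia.
    * case/orP => /eqP hij.
      - have iN : i < N by rewrite hij; exact: ltT.
        by case/and3P: (ge i iN); rewrite hij.
      - have jN : j < N by rewrite hij; exact: ltT.
        by case/and3P: (ge j jN) => h _ _; rewrite e_sym -hij.
Qed.

End Graph.

Lemma cond_equiv (R : realType) (n : nat) (e : rel 'I_n)
  (e_sym : symmetric e) (e_irr : irreflexive e) (L k : nat)
  (hL : forall T, induced_is_path e T -> #|T| <= L) (Lk : L <= k) (w0 w : pt R n) :
  cond e k w0 w <-> cond e (L - 1) w0 w.
Proof.
split.
- move=> C T /and3P [T0 Tc Tconn]; apply: C; apply/and3P; split => //.
  move: Tc Lk; clear; lia.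
- move=> C S /and3P [S0 Sc Sconn] u uS umax t tS.
  have [T [sub uT tT Tconn Tpath]] := geodesic e_sym e_irr uS Sconn tS.
  have Tp : 0 < #|T| by apply/card_gt0P; exists u.
  have hT := hL T Tpath.
  have aT : adm_set e (L - 1) T.
    apply/and3P; split => //; first by apply/set0Pn; exists u.
    move: Tp hT; clear; lia.
  apply: (C T aT u uT) => // t' t'T; apply: umax; exact: (subsetP sub).
Qed.

Lemma nc_seteq (R : realType) (n : nat) (P F G : pt R n -> Prop) :
  set_eq F G -> set_eq (normal_cone P F) (normal_cone P G).
Proof.
move=> hFG w; split => h x hx; apply: h; by apply/hFG.
Qed.

Theorem mainTheorem5 (R : realType) (n : nat) (e : rel 'I_n)
  (e_sym : symmetric e) (e_irr : irreflexive e)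
  (e_conn : connected_graph e)
  (M : {set 'I_n})
  (M_path : induced_is_path e M)
  (M_max : forall S : {set 'I_n}, induced_is_path e S -> #|S| <= #|M|) :
  forall k : nat, #|M| <= k ->
    normally_equivalent (@graph_polytope R n e k)
                        (@graph_polytope R n e (#|M| - 1)).
Proof.
move=> k leMk.
have [i0 _] : exists i0 : 'I_n, true.
  by case/andP: e_conn => /set0Pn [x _] _; exists x.
have EQ := cond_equiv (R := R) e_sym e_irr M_max leMk.
split.
- move=> F [_ [w0 hF]].
  exists (face_w (@graph_polytope R n e (#|M| - 1)) w0); split.
    split; first exact: face_nonempty.
    by exists w0.
  move=> w; split => H.
    apply/(nc_char e i0)/EQ/(nc_char e i0); exact: ((nc_seteq _ hF w).1 H).
  apply: ((nc_seteq _ hF w).2); apply/(nc_char e i0)/EQ/(nc_char e i0); exact: H.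
- move=> G [_ [w0 hG]].
  exists (face_w (@graph_polytope R n e k) w0); split.
    split; first exact: face_nonempty.
    by exists w0.
  move=> w; split => H.
    apply: ((nc_seteq _ hG w).2); apply/(nc_char e i0)/EQ/(nc_char e i0); exact: H.
  apply/(nc_char e i0)/EQ/(nc_char e i0); exact: ((nc_seteq _ hG w).1 H).
Qed.
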